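(* Let $b\ge 2$ be an integer. Every natural number that is antipalindromic in base $b$ and whose base-$b$ expansion has an odd number of digits is divisible by $\frac{b-1}{2}$ (in particular, $b$ is then odd, so $\frac{b-1}{2}$ is an integer).
   Context: For an integer $b\ge 2$, every natural number $m$ has a unique base-$b$ expansion $m=a_nb^n+\dots+a_1b+a_0$ with $a_0,\dots,a_n\in\{0,1,\dots,b-1\}$ and $a_n\neq 0$ (it has $n+1$ digits). The number $m$ is antipalindromic in base $b$ if $a_j=b-1-a_{n-j}$ for all $j\in\{0,1,\dots,n\}$. *)

(* Defs.v *)
From mathcomp Require Import all_boot.
Set Implicit Arguments. Unset Strict Implicit. Unset Printing Implicit Defensive.

(* A digit sequence a = [:: a_0; a_1; ...; a_n] (little-endian: a_j is the
   coefficient of b^j) is the base-b expansion of m when every digit lies in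
   {0,...,b-1}, the leading digit a_n is nonzero, and
   m = a_n b^n + ... + a_1 b + a_0. *)
Definition base_expansion (b m : nat) (a : seq nat) : Prop :=
  [/\ 0 < size a,
      all (fun d => d < b) a,
      last 0 a != 0
    & m = \sum_(j < size a) nth 0 a j * b ^ j].

Definition antipalindromic_digits (b : nat) (a : seq nat) : Prop :=
  forall j, j < size a -> nth 0 a j = b.-1 - nth 0 a ((size a).-1 - j).

Definition antipalindromic (b m : nat) : Prop :=
  exists a, base_expansion b m a /\ antipalindromic_digits b a.

(* Main.v *)
Require Import Defs.
From mathcomp Require Import all_boot.
From mathcomp Require Import zify.

Theorem mainTheorem4 (b m : nat) (a : seq nat) :
  2 <= b ->
  base_expansion b m a ->
  antipalindromic_digits b a ->
  odd (size a) ->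
  odd b /\ (b - 1)./2 %| m.
Proof.
move=> hb [hs hall _ hm] hap hodd.
set n := size a in hs hm hodd hap *.
have hlt : forall j, j < n -> nth 0 a j < b.
  by move=> j hj; apply: (all_nthP 0 hall).
have hk : n./2 < n by rewrite -{2}(odd_double_half n) hodd; lia.
have hkk : n.-1 - n./2 = n./2 by rewrite -{1}(odd_double_half n) hodd; lia.
have := hap _ hk; rewrite hkk => hx.
have hxl := hlt _ hk.
set x := nth 0 a n./2 in hx hxl.
have hbx : b = 2 * x + 1 by lia.
have hc : (b - 1)./2 = x by rewrite hbx addnK mul2n doubleK.
split; first by rewrite hbx addn1 /= oddM.
rewrite hc.
have hS : \sum_(j < n) nth 0 a j = n * x.
  have e1 : \sum_(j < n) nth 0 a j = \sum_(j < n) nth 0 a (n.-1 - j).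
    rewrite (reindex_inj rev_ord_inj) /=; apply: eq_bigr => j _.
    congr nth; rewrite subnS; lia.
  have : 2 * \sum_(j < n) nth 0 a j = n * (2 * x).
    rewrite mul2n -addnn {1}e1 -big_split /=.
    rewrite (eq_bigr (fun _ => 2 * x)) ?sum_nat_const ?card_ord //.
    move=> j _; have := hap _ (ltn_ord j).
    have : nth 0 a (n.-1 - j) < b by apply: hlt; lia.
    move=> h1; rewrite -/n => h2; lia.
  lia.
rewrite /dvdn; apply/eqP.
have : m = \sum_(j < n) nth 0 a j %[mod x].
  rewrite hm -modn_summ -[in RHS]modn_summ; congr (_ %% _); apply: eq_bigr => j _.
  by rewrite -modnMmr hbx modnMDXl exp1n modnMmr muln1.
by move=> ->; rewrite hS modnMl.
Qed.
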